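(* Fix non-negative integers $a\leq b$ and a positive integer $r$, and let $\mu=\frac{a+b}{2r}$. For integers $-1\leq\ell\leq\lfloor(b-a)/r\rfloor$ define $\mu''_\ell=\mu-\frac{\ell+1}{2}$ and $\theta_\ell=\beta_{r,\mu''_\ell}+(\ell+1)(r+a)$. Let $0\leq\ell\leq\lfloor(b-a)/r\rfloor$ be an integer. Then $\theta_\ell<\theta_{\ell-1}$, unless either $\ell=\lfloor(b-a)/r\rfloor$, or $\ell=\lfloor(b-a)/r\rfloor-1$ and $\lfloor\mu''_{\ell-1}\rfloor=\lfloor\mu''_\ell\rfloor$.
   Context: For an integer $r\geq1$ and rational $\mu\geq-1$: $\alpha_\mu=\lfloor\mu\rfloor+1$ and $\beta_{r,\mu}=r\alpha_\mu(2\mu-\alpha_\mu+2)$. (All $\mu''_\ell$ in the stated range satisfy $\mu''_\ell\geq-1$.) *)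

(* Defs.v *)
From mathcomp Require Import all_boot all_order all_algebra.
Import Order.TTheory GRing.Theory Num.Theory.
Local Open Scope ring_scope.

Definition alpha (mu : rat) : int := Num.floor mu + 1.

Definition beta (r : nat) (mu : rat) : rat :=
  r%:R * (alpha mu)%:~R * (2 * mu - (alpha mu)%:~R + 2).

Definition mu0 (a b r : nat) : rat := (a + b)%:R / (2 * r%:R).

Definition mupp (a b r : nat) (l : int) : rat := mu0 a b r - (l + 1)%:~R / 2.

Definition theta (a b r : nat) (l : int) : rat :=
  beta r (mupp a b r l) + (l + 1)%:~R * (r + a)%:R.

(* Main.v *)
Require Import Defs.
From mathcomp Require Import all_boot all_order all_algebra.
From mathcomp Require Import lra zify ring.
Import Order.TTheory GRing.Theory Num.Theory.
Local Open Scope ring_scope.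

Lemma case1 (R A B L Q m f : rat) :
  0 < R -> 0 <= A -> 2 * R * m = A + B - R * (L + 1) -> Q * R <= B - A ->
  L <= Q - 2 -> m + 1/2 < f + 1 -> A < R * f.
Proof.
move=> HR HA Hm HQ HL Hf.
have h1 : R * (L + 2) <= R * Q by rewrite ler_pM2l //; lra.
have h2 : R * (m + 1/2 - f) < R * 1 by rewrite ltr_pM2l //; lra.
nra.
Qed.

Lemma case2 (R A B L Q m f : rat) :
  0 < R -> 0 <= A -> 2 * R * m = A + B - R * (L + 1) -> Q * R <= B - A ->
  L <= Q - 1 -> f <= m -> f + 1 <= m + 1/2 -> (L <= Q - 2 \/ f < m) ->
  A < R * (2 * m - f).
Proof.
move=> HR HA Hm HQ HL Hf1 Hf2 [HL2|Hfm].
  have h1 : R * (L + 2) <= R * Q by rewrite ler_pM2l //; lra.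
  have h2 : 0 <= R * (m - f) by rewrite mulr_ge0 //; lra.
  nra.
have h1 : R * (L + 1) <= R * Q by rewrite ler_pM2l //; lra.
have h2 : 0 < R * (m - f) by rewrite mulr_gt0 //; lra.
nra.
Qed.

Theorem proposition3p8 (a b r : nat) (l : int) :
  (a <= b)%N -> (0 < r)%N ->
  0 <= l -> l <= ((b - a) %/ r)%N%:Z ->
  ~ (l = ((b - a) %/ r)%N%:Z) ->
  ~ (l = ((b - a) %/ r)%N%:Z - 1 /\
     Num.floor (mupp a b r (l - 1)) = Num.floor (mupp a b r l)) ->
  theta a b r l < theta a b r (l - 1).
Proof.
move=> hab hr hl0 hlq hne hexc.
set q := ((b - a) %/ r)%N in hlq hne hexc.
have hqr : (q * r <= b - a)%N by rewrite leq_trunc_div.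
have hQ : (q%:R * r%:R <= b%:R - a%:R :> rat).
  rewrite -natrM -natrB //; by rewrite ler_nat.
have hR : (0 < r%:R :> rat) by rewrite ltr0n.
have hA : (0 <= a%:R :> rat) by rewrite ler0n.
set m := mupp a b r l.
have hm1 : mupp a b r (l - 1) = m + 1/2.
  by rewrite /m /mupp subrK intrD; field.
have hm : 2 * r%:R * m = a%:R + b%:R - r%:R * (l%:~R + 1) :> rat.
  rewrite /m /mupp /mu0 intrD natrD; field; try done.
  by rewrite pnatr_eq0 -lt0n.
set f := Num.floor m.
set F := Num.floor (m + 1/2).
have [hf1 hf2] : f%:~R <= m /\ m < (f + 1)%:~R.
  by have /andP[] := floor_itv m.
have [hF1 hF2] : F%:~R <= m + 1/2 /\ m + 1/2 < (F + 1)%:~R.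
  by have /andP[] := floor_itv (m + 1/2).
have hFf : F = f \/ F = f + 1.
  have e1 : F < f + 2.
    rewrite -(ltr_int rat) intrD; rewrite intrD in hf2; lra.
  have e2 : f < F + 1.
    rewrite -(ltr_int rat) intrD; rewrite intrD in hF2; lra.
  lia.
rewrite /theta hm1 /beta /alpha -/m -/f -/F subrK.
have hL : l <= q%:Z - 1 by move: hlq hne; clear; lia.
have hLQ : l%:~R <= q%:R - 1 :> rat.
  by rewrite -[q%:R]/(q%:Z%:~R) -[1]/(1%:~R) -intrB ler_int.
rewrite !intrD (_ : 1%:~R = 1 :> rat) //.
rewrite natrD.
case: hFf => eF; rewrite eF.
- have hL2 : l%:~R <= q%:R - 2 :> rat.
    have : l <= q%:Z - 2.
      case: (lerP l (q%:Z - 2)) => // hlt; exfalso; apply: hexc; split.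
        by move: hL hlt; clear; lia.
      by rewrite hm1 -/F eF.
    rewrite -(ler_int rat) intrB => h.
    by rewrite (_ : 2 = (2:int)%:~R :> rat) // (_ : q%:R = q%:Z%:~R :> rat).
  rewrite eF intrD in hF2.
  have h := case1 _ _ _ _ _ _ (f%:~R) hR hA hm hQ hL2 hF2.
  nra.
- rewrite eF intrD in hF1; rewrite intrD (_ : 1%:~R = 1 :> rat) //.
  have hor : (l%:~R <= q%:R - 2 :> rat) \/ f%:~R < m.
    case: (lerP l (q%:Z - 2)) => hlt.
      left; have h : (l%:~R <= (q%:Z - 2)%:~R :> rat) by rewrite ler_int.
      rewrite intrB in h.
      by rewrite (_ : 2 = (2:int)%:~R :> rat) // (_ : q%:R = q%:Z%:~R :> rat).
    right; rewrite lt_neqAle hf1 andbT; apply/eqP => hfm.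
    apply: hexc; split; first by move: hL hlt hne; clear; lia.
    rewrite hm1 -/f.
    apply: floor_def; rewrite -hfm intrD; apply/andP; split; lra.
  have h := case2 _ _ _ _ _ _ _ hR hA hm hQ hLQ hf1 hF1 hor.
  nra.
Qed.
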